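(* For all $\lambda\in\mathbf{k}$ and $v\in\mathcal{V}^{\mathrm{DR}}$, one has in $\mathcal{V}^{\mathrm{DR}}\otimes\mathcal{V}^{\mathrm{DR}}$: \[\Delta^{\mathcal{W},\mathrm{DR}}(\lambda+ve_1)=\lambda(1\otimes1)+\mathsf{r}\mathrm{row}\cdot\mathsf{r}\rho(v)\cdot\mathsf{r}\mathrm{col},\] i.e. $\Delta^{\mathcal{W},\mathrm{DR}}$ followed by $\mathcal{W}^{\mathrm{DR}}\otimes\mathcal{W}^{\mathrm{DR}}\hookrightarrow\mathcal{V}^{\mathrm{DR}}\otimes\mathcal{V}^{\mathrm{DR}}$ equals $\Delta_{\mathcal{O}^{\mathrm{DR}}_{\mathsf{mat}}}$ composed with the isomorphism $\mathcal{W}^{\mathrm{DR}}\cong\mathbf{k}\oplus(\mathcal{V}^{\mathrm{DR}},\cdot_{e_1})$.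
   Context: $\mathbf{k}$ is a commutative $\mathbb{Q}$-algebra. $\mathfrak{f}_2$ is the free Lie algebra on $e_0,e_1$, $\mathcal{V}^{\mathrm{DR}}=U(\mathfrak{f}_2)$, $e_\infty=-e_0-e_1$; $\mathcal{V}^{\mathrm{DR}}\otimes\mathcal{V}^{\mathrm{DR}}=U(\mathfrak{f}_2\oplus\mathfrak{f}_2)$ with $e_i=e_i\otimes1$, $f_i=1\otimes e_i$. $\mathrm{S}_{\mathfrak{g}}$ is the antiautomorphism of $U(\mathfrak{g})$ with $x\mapsto-x$ on $\mathfrak{g}$. $\rho:\mathcal{V}^{\mathrm{DR}}\to M_3(\mathcal{V}^{\mathrm{DR}}\otimes\mathcal{V}^{\mathrm{DR}})$ is the algebra morphism with $\rho(e_0)=\begin{pmatrix}e_0&0&0\\0&-e_1+f_0&-e_1\\0&-e_\infty-f_0&-e_\infty\end{pmatrix}$, $\rho(e_1)=\begin{pmatrix}e_1&-f_1&0\\-e_1&f_1&0\\0&0&0\end{pmatrix}$, and $\mathsf{r}\rho=M_3(\mathrm{S}_{\mathfrak{f}_2\oplus\mathfrak{f}_2})\circ{}^t(-)\circ\rho\circ\mathrm{S}_{\mathfrak{f}_2}$ (entrywise, transpose). $\mathsf{r}\mathrm{row}=(1,-1,0)$, $\mathsf{r}\mathrm{col}={}^t(e_1,-f_1,0)$. For an algebra $B$ and $e\in B$, $\mathbf{k}\oplus(B,\cdot_e)$ has product $(\lambda,b)(\lambda',b')=(\lambda\lambda',\lambda b'+\lambda'b+beb')$; $\Delta_{\mathcal{O}^{\mathrm{DR}}_{\mathsf{mat}}}(\lambda,v)=\lambda+\mathsf{r}\mathrm{row}\,\mathsf{r}\rho(v)\,\mathsf{r}\mathrm{col}$.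 $\mathcal{W}^{\mathrm{DR}}=\mathbf{k}\oplus\mathcal{V}^{\mathrm{DR}}e_1$ is a subalgebra, isomorphic to $\mathbf{k}\oplus(\mathcal{V}^{\mathrm{DR}},\cdot_{e_1})$ via $(\lambda,v)\mapsto\lambda+ve_1$, and freely generated by $e_0^ne_1$, $n\ge0$. $\Delta^{\mathcal{W},\mathrm{DR}}:\mathcal{W}^{\mathrm{DR}}\to\mathcal{W}^{\mathrm{DR}}\otimes\mathcal{W}^{\mathrm{DR}}$ is the algebra morphism with $\Delta^{\mathcal{W},\mathrm{DR}}(e_0^ne_1)=e_0^ne_1\otimes1+1\otimes e_0^ne_1-\sum_{k=0}^{n-1}e_0^ke_1\otimes e_0^{n-k-1}e_1$. *)

(* Defs.v *)
From HB Require Import structures.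
From mathcomp Require Import all_boot all_order all_algebra.
Set Implicit Arguments. Unset Strict Implicit. Unset Printing Implicit Defensive.
Import GRing.Theory.
Local Open Scope ring_scope.

(* Words in the letters e0 (= false) and e1 (= true).  Elements of
   V^DR = U(f_2) = k<e0,e1> are represented by their coefficient functions
   word -> k (polynomials are those with finite support; see the theorem).
   Elements of V^DR (x) V^DR = U(f_2 + f_2) = k<e0,e1> (x) k<f0,f1> are
   represented by coefficient functions word -> word -> k : the coefficient
   of e_a f_b (= e_a (x) e_b) at (a, b). *)
Definition word := seq bool.

Section Defs.
Variable k : comRingType.

Definition ser := word -> k.
Definition ser2 := word -> word -> k.

Definition addV (x y : ser) : ser := fun w => x w + y w.
Definition mulV (x y : ser) : ser :=
  fun w => \sum_(i < (size w).+1) x (take i w) * y (drop i w).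
Definition constV (l : k) : ser := fun w => if w == [::] then l else 0.
Definition eV (b : bool) : ser := fun w => (w == [:: b])%:R.
(* antipode S_{f_2}: antiautomorphism with x |-> -x on f_2 *)
Definition SV (x : ser) : ser := fun w => (-1) ^+ size w * x (rev w).

Definition zero2 : ser2 := fun _ _ => 0.
Definition add2 (A B : ser2) : ser2 := fun a b => A a b + B a b.
Definition opp2 (A : ser2) : ser2 := fun a b => - A a b.
Definition scal2 (l : k) (A : ser2) : ser2 := fun a b => l * A a b.
Definition bas2 (u v : word) : ser2 := fun a b => ((a == u) && (b == v))%:R.
Definition one2 : ser2 := bas2 [::] [::].
Definition mul2 (A B : ser2) : ser2 :=
  fun a b => \sum_(i < (size a).+1) \sum_(j < (size b).+1)
               A (take i a) (take j b) * B (drop i a) (drop j b).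
(* e_b = e_b (x) 1 and f_b = 1 (x) e_b *)
Definition e2 (b : bool) : ser2 := bas2 [:: b] [::].
Definition f2 (b : bool) : ser2 := bas2 [::] [:: b].
Definition einf2 : ser2 := opp2 (add2 (e2 false) (e2 true)).
(* antipode S_{f_2 + f_2}: antiautomorphism with x |-> -x on f_2 + f_2;
   since the two factors commute, S(e_a f_b) = (-1)^(|a|+|b|) e_(rev a) f_(rev b) *)
Definition S2 (A : ser2) : ser2 :=
  fun a b => (-1) ^+ (size a + size b) * A (rev a) (rev b).

Definition M3 := 'I_3 -> 'I_3 -> ser2.
Definition M3of (l : seq (seq ser2)) : M3 :=
  fun i j => nth zero2 (nth [::] l i) j.
Definition mulM3 (A B : M3) : M3 :=
  fun i j => \big[add2/zero2]_(l < 3) mul2 (A i l) (B l j).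
Definition idM3 : M3 := fun i j => if i == j then one2 else zero2.
Definition scalM3 (l : k) (A : M3) : M3 := fun i j => scal2 l (A i j).
Definition addM3 (A B : M3) : M3 := fun i j => add2 (A i j) (B i j).
Definition zeroM3 : M3 := fun _ _ => zero2.

Definition rho_e0 : M3 := M3of
  [:: [:: e2 false; zero2; zero2];
      [:: zero2; add2 (opp2 (e2 true)) (f2 false); opp2 (e2 true)];
      [:: zero2; add2 (opp2 einf2) (opp2 (f2 false)); opp2 einf2]].
Definition rho_e1 : M3 := M3of
  [:: [:: e2 true; opp2 (f2 true); zero2];
      [:: opp2 (e2 true); f2 true; zero2];
      [:: zero2; zero2; zero2]].
Definition rho_letter (b : bool) : M3 := if b then rho_e1 else rho_e0.
Definition rho_word (w : word) : M3 := foldr (fun b M => mulM3 (rho_letter b) M) idM3 w.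
(* rho on a polynomial x whose support is contained in the duplicate-free list s *)
Definition rho (s : seq word) (x : ser) : M3 :=
  \big[addM3/zeroM3]_(w <- s) scalM3 (x w) (rho_word w).
(* r rho = M_3(S_{f2+f2}) o transpose o rho o S_{f2}; the support of S x is rev @ s *)
Definition rrho (s : seq word) (x : ser) : M3 :=
  fun i j => S2 (rho [seq rev w | w <- s] (SV x) j i).

Definition rrow (i : 'I_3) : ser2 :=
  nth zero2 [:: one2; opp2 one2; zero2] i.
Definition rcol (j : 'I_3) : ser2 :=
  nth zero2 [:: e2 true; opp2 (f2 true); zero2] j.
Definition row_mat_col (M : M3) : ser2 :=
  \big[add2/zero2]_(i < 3) \big[add2/zero2]_(j < 3) mul2 (mul2 (rrow i) (M i j)) (rcol j).

Definition Delta_Omat (s : seq word) (l : k) (v : ser) : ser2 :=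
  add2 (scal2 l one2) (row_mat_col (rrho s v)).

(* ---- W^DR and Delta^{W,DR} ----
   W^DR = k + V^DR e1 is freely generated by y_n = e0^n e1; every word that is
   empty or ends in e1 factors uniquely as a product of the y_n. *)
Definition yword (n : nat) : word := rcons (nseq n false) true.
Definition DeltaY (n : nat) : ser2 :=
  add2 (add2 (bas2 (yword n) [::]) (bas2 [::] (yword n)))
       (opp2 (\big[add2/zero2]_(i < n) bas2 (yword i) (yword (n - i.+1)))).
(* the algebra morphism Delta^W on the word e0^n w (w the rest), following the
   unique factorisation into generators y_m; words not in W get junk value 0 *)
Fixpoint DW_aux (n : nat) (w : word) : ser2 :=
  match w with
  | [::] => if n is 0 then one2 else zero2
  | false :: w' => DW_aux n.+1 w'
  | true :: w' => mul2 (DeltaY n) (DW_aux 0 w')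
  end.
Definition DW (w : word) : ser2 := DW_aux 0 w.
Definition DeltaW (s : seq word) (x : ser) : ser2 :=
  \big[add2/zero2]_(w <- s) scal2 (x w) (DW w).

End Defs.

(* Main.v *)
Require Import Defs.
From HB Require Import structures.
From mathcomp Require Import all_boot all_order all_algebra.
From mathcomp Require Import boolp.
From mathcomp Require Import ring zify.
Set Implicit Arguments. Unset Strict Implicit. Unset Printing Implicit Defensive.
Import GRing.Theory.
Local Open Scope ring_scope.

Section S.
Variable k : comRingType.
Local Notation R := (ser2 k).
HB.instance Definition _ := Choice.copy R (word -> word -> k).

Lemma add2A : associative (@add2 k).
Proof. by move=> x y z; apply/funext=> a; apply/funext=> b; rewrite /add2 addrA. Qed.
Lemma add2C : commutative (@add2 k).
Proof. by move=> x y; apply/funext=> a; apply/funext=> b; rewrite /add2 addrC. Qed.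
Lemma add02 : left_id (zero2 k) (@add2 k).
Proof. by move=> x; apply/funext=> a; apply/funext=> b; rewrite /add2 /zero2 add0r. Qed.
Lemma addN2 : left_inverse (zero2 k) (@opp2 k) (@add2 k).
Proof. by move=> x; apply/funext=> a; apply/funext=> b; rewrite /add2 /zero2 /opp2 addNr. Qed.

HB.instance Definition _ := GRing.isZmodule.Build R add2A add2C add02 addN2.

Definition splits_def (a : word) : seq (word * word) :=
  [seq (take i a, drop i a) | i <- iota 0 (size a).+1].
Fact splits_key : unit. Proof. by []. Qed.
Definition splits := locked_with splits_key splits_def.
Lemma splitsE : splits = splits_def. Proof. by rewrite /splits unlock. Qed.


Lemma splits_nil : splits [::] = [:: ([::], [::])].
Proof. by rewrite splitsE. Qed.

Lemma splits_cons x a : splits (x :: a) = ([::], x :: a) :: [seq (x :: p.1, p.2) | p <- splits a].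
Proof.
rewrite splitsE /splits_def.
change (iota 0 (size (x :: a)).+1) with (0 :: iota 1 (size a).+1).
rewrite (iotaDl 1 0) -!map_comp /=.
rewrite -map_comp; congr (_ :: _ :: _); exact: eq_map.
Qed.

Lemma sum_splits a (F : word -> word -> k) :
  \sum_(i < (size a).+1) F (take i a) (drop i a) = \sum_(p <- splits a) F p.1 p.2.
Proof. by rewrite splitsE /splits_def big_map -(big_mkord xpredT (fun i => F (take i a) (drop i a))). Qed.

Lemma mul2E (A B : R) a b : mul2 A B a b =
  \sum_(p <- splits a) \sum_(q <- splits b) A p.1 q.1 * B p.2 q.2.
Proof.
rewrite /mul2 (sum_splits a (fun u v => \sum_(j < (size b).+1) A u (take j b) * B v (drop j b))).
by apply: eq_bigr => p _; rewrite (sum_splits b (fun u v => A p.1 u * B p.2 v)).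
Qed.

Lemma splits_assoc a (G : word -> word -> word -> k) :
  \sum_(p <- splits a) \sum_(p' <- splits p.1) G p'.1 p'.2 p.2 =
  \sum_(p <- splits a) \sum_(p' <- splits p.2) G p.1 p'.1 p'.2.
Proof.
elim/list_ind: a G => [|x a IH] G; first by rewrite splits_nil !big_cons !big_nil /= splits_nil !big_cons !big_nil /= !addr0.
rewrite splits_cons !big_cons big_map /= splits_nil !big_cons !big_nil /=.
rewrite splits_cons big_cons big_map /=.
under eq_bigr => p _ do rewrite splits_cons big_cons big_map /=.
rewrite big_split /= (IH (fun u v w => G (x :: u) v w)).
by rewrite big_map addr0 addrA.
Qed.


Lemma splits_first a (F : word -> word -> k) :
  \sum_(p <- splits a) (p.1 == [::])%:R * F p.1 p.2 = F [::] a.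
Proof.
case: a => [|x a]; first by rewrite splits_nil big_cons big_nil /= mul1r addr0.
rewrite splits_cons big_cons big_map /= mul1r big1 ?addr0 // => p _.
by rewrite mul0r.
Qed.

Lemma splits_last a (F : word -> word -> k) :
  \sum_(p <- splits a) (p.2 == [::])%:R * F p.1 p.2 = F a [::].
Proof.
elim/list_ind: a F => [|x a IH] F; first by rewrite splits_nil big_cons big_nil /= mul1r addr0.
by rewrite splits_cons big_cons big_map /= mul0r add0r (IH (fun u v => F (x :: u) v)).
Qed.

Lemma splits_bas a u u' :
  \sum_(p <- splits a) (p.1 == u)%:R * (p.2 == u')%:R = (a == u ++ u')%:R :> k.
Proof.
elim/list_ind: a u => [|x a IH] u.
  rewrite splits_nil big_cons big_nil addr0 /= -natrM.
  by case: u => [|??]; case: u'.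
rewrite splits_cons big_cons big_map /=.
case: u => [|y u] /=.
  rewrite mul1r big1 ?addr0 // => p _; by rewrite mul0r.
rewrite mul0r add0r.
under eq_bigr => p _ do rewrite eqseq_cons -mulnb natrM -mulrA.
by rewrite -mulr_sumr IH eqseq_cons -mulnb natrM.
Qed.


Lemma sum2Ml (I J : Type) (s : seq I) (t : seq J) (F : I -> J -> k) c :
  (\sum_(i <- s) \sum_(j <- t) F i j) * c = \sum_(i <- s) \sum_(j <- t) F i j * c.
Proof. rewrite mulr_suml; apply: eq_bigr => i _; exact: mulr_suml. Qed.
Lemma sum2Mr (I J : Type) (s : seq I) (t : seq J) (F : I -> J -> k) c :
  c * (\sum_(i <- s) \sum_(j <- t) F i j) = \sum_(i <- s) \sum_(j <- t) c * F i j.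
Proof. rewrite mulr_sumr; apply: eq_bigr => i _; exact: mulr_sumr. Qed.

Lemma mul2A : associative (@mul2 k).
Proof.
move=> A B C; apply/funext=> a; apply/funext=> b.
rewrite !mul2E.
transitivity (\sum_(p <- splits a) \sum_(p' <- splits p.2) \sum_(q <- splits b)
   \sum_(q' <- splits q.2) A p.1 q.1 * (B p'.1 q'.1 * C p'.2 q'.2)).
  under eq_bigr => p _ do under eq_bigr => q _ do rewrite mul2E sum2Mr.
  by apply: eq_bigr => p _; rewrite exchange_big.
symmetry.
under eq_bigr => p _ do under eq_bigr => q _ do rewrite mul2E sum2Ml.
under eq_bigr => p _ do rewrite exchange_big.
rewrite (splits_assoc a (fun u1 u2 w => \sum_(q <- splits b) \sum_(q' <- splits q.1)
   A u1 q'.1 * B u2 q'.2 * C w q.2)).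
apply: eq_bigr => p _; apply: eq_bigr => p' _.
rewrite (splits_assoc b (fun u1 u2 w => A p.1 u1 * B p'.1 u2 * C p'.2 w)).
by apply: eq_bigr => q _; apply: eq_bigr => q' _; rewrite mulrA.
Qed.

Lemma mul12 : left_id (one2 k) (@mul2 k).
Proof.
move=> A; apply/funext=> a; apply/funext=> b; rewrite mul2E.
under eq_bigr => p _ do under eq_bigr => q _ do
  rewrite /one2 /bas2 -mulnb natrM mulrAC -mulrA.
transitivity (\sum_(p <- splits a) (p.1 == [::])%:R *
   \sum_(q <- splits b) (q.1 == [::])%:R * A p.2 q.2).
  by apply: eq_bigr => p _; rewrite mulr_sumr; apply: eq_bigr => q _; ring.
rewrite (splits_first a (fun _ v => \sum_(q <- splits b) (q.1 == [::])%:R * A v q.2)).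
exact: (splits_first b (fun _ w => A a w)).
Qed.

Lemma mul21 : right_id (one2 k) (@mul2 k).
Proof.
move=> A; apply/funext=> a; apply/funext=> b; rewrite mul2E.
under eq_bigr => p _ do under eq_bigr => q _ do
  rewrite /one2 /bas2 -mulnb natrM.
transitivity (\sum_(p <- splits a) (p.2 == [::])%:R *
   \sum_(q <- splits b) (q.2 == [::])%:R * A p.1 q.1).
  by apply: eq_bigr => p _; rewrite mulr_sumr; apply: eq_bigr => q _; ring.
rewrite (splits_last a (fun v _ => \sum_(q <- splits b) (q.2 == [::])%:R * A v q.1)).
exact: (splits_last b (fun w _ => A a w)).
Qed.

Lemma mul2Dl : left_distributive (@mul2 k) (@add2 k).
Proof.
move=> A B C; apply/funext=> a; apply/funext=> b; rewrite /add2 !mul2E -big_split.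
by apply: eq_bigr => p _; rewrite -big_split; apply: eq_bigr => q _; rewrite mulrDl.
Qed.
Lemma mul2Dr : right_distributive (@mul2 k) (@add2 k).
Proof.
move=> A B C; apply/funext=> a; apply/funext=> b; rewrite /add2 !mul2E -big_split.
by apply: eq_bigr => p _; rewrite -big_split; apply: eq_bigr => q _; rewrite mulrDr.
Qed.

HB.instance Definition _ := GRing.Zmodule_isPzRing.Build R mul2A mul12 mul21 mul2Dl mul2Dr.

Lemma bas2M u v u' v' : bas2 k u v * bas2 k u' v' = bas2 k (u ++ u') (v ++ v').
Proof.
apply/funext=> a; apply/funext=> b; rewrite /GRing.mul /= mul2E /bas2.
transitivity ((\sum_(p <- splits a) (p.1 == u)%:R * (p.2 == u')%:R) *
   (\sum_(q <- splits b) (q.1 == v)%:R * (q.2 == v')%:R) : k).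
  rewrite mulr_suml; apply: eq_bigr => p _; rewrite mulr_sumr; apply: eq_bigr => q _.
  rewrite -!mulnb !natrM; ring.
by rewrite !splits_bas -natrM mulnb.
Qed.


Lemma S2M (A B : R) : S2 (A * B) = S2 B * S2 A.
Proof.
apply/funext=> a; apply/funext=> b; rewrite /GRing.mul /= /S2 /mul2 !size_rev mulr_sumr.
rewrite (reindex_inj rev_ord_inj); apply: eq_bigr => i _.
rewrite mulr_sumr (reindex_inj rev_ord_inj); apply: eq_bigr => j _.
have hi : (i <= size a)%N by rewrite -ltnS.
have hj : (j <= size b)%N by rewrite -ltnS.
have -> : (rev_ord i : nat) = (size a - i)%N by rewrite /= subSS.
have -> : (rev_ord j : nat) = (size b - j)%N by rewrite /= subSS.
rewrite !take_rev !drop_rev !subKn //.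
rewrite !size_takel // !size_drop.
have -> : (size a + size b = (i + j) + ((size a - i) + (size b - j)))%N by lia.
rewrite exprD.
move: ((-1) ^+ (i + j)) ((-1) ^+ (size a - i + (size b - j))) (A _ _) (B _ _) => s1 s2 x y.
ring.
Qed.

Lemma S2D (A B : R) : S2 (A + B) = S2 A + S2 B.
Proof. by apply/funext=> a; apply/funext=> b; rewrite /GRing.add /= /S2 /add2 mulrDr. Qed.
Lemma S2N (A : R) : S2 (- A) = - S2 A.
Proof. by apply/funext=> a; apply/funext=> b; rewrite /GRing.opp /= /S2 /opp2 mulrN. Qed.
Lemma S20 : S2 (0 : R) = 0.
Proof. by apply/funext=> a; apply/funext=> b; rewrite /S2 /GRing.zero /= /zero2 mulr0. Qed.

Lemma rev_eq0 (a : word) : (rev a == [::]) = (a == [::]).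
Proof. by case: a => // x a; rewrite rev_cons; case: (rev a). Qed.

Lemma rev_eq1 (a : word) b : (rev a == [:: b]) = (a == [:: b]).
Proof. by rewrite -[[:: b]]/(rev [:: b]) (inj_eq (can_inj (@revK bool))). Qed.

Lemma S21 : S2 (1 : R) = 1.
Proof.
change (S2 (one2 k) = one2 k).
apply/funext=> a; apply/funext=> b; rewrite /S2 /one2 /bas2 !rev_eq0.
by case: a => [|x a]; case: b => [|y b] //=; rewrite ?mulr0 ?mul1r.
Qed.

Lemma S2_sum (I : Type) (r : seq I) (F : I -> R) : S2 (\sum_(i <- r) F i) = \sum_(i <- r) S2 (F i).
Proof.
elim: r => [|x r IH]; first by rewrite !big_nil S20.
by rewrite !big_cons S2D IH.
Qed.

Lemma scal2_sum (I : Type) (r : seq I) (F : I -> R) c :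
  scal2 c (\sum_(i <- r) F i) = \sum_(i <- r) scal2 c (F i).
Proof.
elim: r => [|x r IH]; first by rewrite !big_nil; apply/funext=> a; apply/funext=> b; rewrite /scal2 /GRing.zero /= /zero2 mulr0.
rewrite !big_cons -IH; apply/funext=> a; apply/funext=> b.
by rewrite /scal2 /GRing.add /= /add2 mulrDr.
Qed.

Lemma scal2Ml c (X A : R) : scal2 c X * A = scal2 c (X * A).
Proof.
apply/funext=> a; apply/funext=> b; rewrite /GRing.mul /= /scal2 !mul2E mulr_sumr.
by apply: eq_bigr => p _; rewrite mulr_sumr; apply: eq_bigr => q _; rewrite mulrA.
Qed.
Lemma scal2Mr c (X A : R) : A * scal2 c X = scal2 c (A * X).
Proof.
apply/funext=> a; apply/funext=> b; rewrite /GRing.mul /= /scal2 !mul2E mulr_sumr.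
by apply: eq_bigr => p _; rewrite mulr_sumr; apply: eq_bigr => q _; rewrite mulrCA.
Qed.
Lemma scal2A c d (X : R) : scal2 c (scal2 d X) = scal2 (c * d) X.
Proof. by apply/funext=> a; apply/funext=> b; rewrite /scal2 mulrA. Qed.
Lemma scal2D c (X Y : R) : scal2 c (X + Y) = scal2 c X + scal2 c Y.
Proof. by apply/funext=> a; apply/funext=> b; rewrite /scal2 /GRing.add /= /add2 mulrDr. Qed.
Lemma scal21 (X : R) : scal2 1 X = X.
Proof. by apply/funext=> a; apply/funext=> b; rewrite /scal2 mul1r. Qed.
Lemma S2scal c (X : R) : S2 (scal2 c X) = scal2 c (S2 X).
Proof. by apply/funext=> a; apply/funext=> b; rewrite /scal2 /S2 mulrCA. Qed.
Lemma sign_scal2 n (X : R) : (-1) ^+ n * X = scal2 ((-1) ^+ n) X.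
Proof.
elim: n => [|n IH]; first by rewrite !expr0 mul1r scal21.
rewrite !exprS -mulrA IH mulN1r.
change (opp2 (scal2 ((-1) ^+ n) X) = scal2 (-1 * (-1) ^+ n) X).
by apply/funext=> a; apply/funext=> b; rewrite /scal2 /opp2 mulN1r mulNr.
Qed.

Definition lin1 (X : R) := S2 X = - X.
Lemma lin1_add X Y : lin1 X -> lin1 Y -> lin1 (add2 X Y).
Proof. by rewrite /lin1 => hX hY; rewrite (S2D X Y) hX hY opprD. Qed.
Lemma lin1_opp X : lin1 X -> lin1 (opp2 X).
Proof. by rewrite /lin1 => hX; rewrite (S2N X) hX. Qed.
Lemma lin1_zero : lin1 (zero2 k).
Proof. by rewrite /lin1 (S20) oppr0. Qed.
Lemma lin1_e b : lin1 (e2 k b).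
Proof.
rewrite /lin1; change (S2 (e2 k b) = opp2 (e2 k b)); apply/funext=> a; apply/funext=> c; rewrite /S2 /e2 /bas2 /opp2 rev_eq1 rev_eq0.
case: a => [|x [|y a]]; case: c => [|z c]; rewrite ?eqseq_cons /= ?andbF ?mulr0 ?oppr0 //.
by case: (x == b); rewrite /= ?mulr0 ?oppr0 // expr1 mulN1r.
Qed.
Lemma lin1_f b : lin1 (f2 k b).
Proof.
rewrite /lin1; change (S2 (f2 k b) = opp2 (f2 k b)); apply/funext=> a; apply/funext=> c; rewrite /S2 /f2 /bas2 /opp2 rev_eq1 rev_eq0.
case: c => [|x [|y c]]; case: a => [|z a]; rewrite ?eqseq_cons /= ?andbF ?mulr0 ?oppr0 //.
by case: (x == b); rewrite /= ?mulr0 ?oppr0 // expr1 mulN1r.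
Qed.
Lemma lin1_einf : lin1 (einf2 k).
Proof. exact/lin1_opp/lin1_add/lin1_e/lin1_e. Qed.

Lemma lin1_rho b (i j : 'I_3) : lin1 (rho_letter k b i j).
Proof.
case: b; case: i => [[|[|[|?]]] ?] //; case: j => [[|[|[|?]]] ?] //=;
 rewrite /M3of /=;
 repeat first [apply: lin1_add | apply: lin1_opp | apply: lin1_zero | apply: lin1_e
   | apply: lin1_f | apply: lin1_einf].
Qed.

Lemma bigA2 (I : Type) (r : seq I) (P : pred I) (F : I -> R) :
  \big[@add2 k/zero2 k]_(i <- r | P i) F i = \sum_(i <- r | P i) F i.
Proof. by []. Qed.

Definition mx (M : M3 k) : 'M[R]_3 := \matrix_(i, j) M i j.

Lemma mx_mul A B : mx (mulM3 A B) = mx A *m mx B.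
Proof. by apply/matrixP => i j; rewrite !mxE /mulM3 bigA2; apply: eq_bigr => l _; rewrite !mxE. Qed.

Lemma mx_id : mx (idM3 k) = 1%:M.
Proof. by apply/matrixP => i j; rewrite !mxE /idM3; case: eqP. Qed.

Definition TS (M : 'M[R]_3) : 'M[R]_3 := \matrix_(i, j) S2 (M j i).

Lemma TS_mul A B : TS (A *m B) = TS B *m TS A.
Proof.
apply/matrixP => i j; rewrite /TS !mxE S2_sum; apply: eq_bigr => l _.
by rewrite !mxE S2M.
Qed.

Lemma TS_1 : TS 1%:M = 1%:M.
Proof. by apply/matrixP => i j; rewrite /TS !mxE eq_sym; case: eqP => _; rewrite ?S21 ?S20. Qed.

Definition rhom b := mx (rho_letter k b).

Lemma rho_word_rcons u b : mx (rho_word k (rcons u b)) = mx (rho_word k u) *m rhom b.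
Proof.
elim: u => [|c u IH] /=; first by rewrite mx_mul mx_id mul1mx mulmx1.
by rewrite !mx_mul IH mulmxA.
Qed.

Definition Rl b := (rhom b)^T.
Definition Qw (w : word) := foldr (fun b M => Rl b *m M) 1%:M w.

Lemma TS_rhom b : TS (rhom b) = - Rl b.
Proof.
apply/matrixP => i j; rewrite /TS /Rl /rhom !mxE.
exact: lin1_rho.
Qed.

Lemma mx_sign m p n (A : 'M[R]_(m, 3)) (B : 'M[R]_(3, p)) : A *m ((-1) ^+ n *: B) = (-1) ^+ n *: (A *m B).
Proof.
elim: n => [|n IH]; first by rewrite !expr0 !scale1r.
by rewrite !exprS !mulN1r !scaleNr mulmxN IH.
Qed.

Lemma TS_rho w : TS (mx (rho_word k (rev w))) = (-1) ^+ size w *: Qw w.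
Proof.
elim: w => [|b w IH]; first by rewrite /= mx_id TS_1 expr0 scale1r.
rewrite rev_cons rho_word_rcons TS_mul IH TS_rhom /= mx_sign mulNmx.
by rewrite scalerN exprS mulN1r scaleNr.
Qed.

Definition rowv : 'rV[R]_3 := \row_i rrow k i.
Definition colv : 'cV[R]_3 := \col_j rcol k j.

Lemma rmc M : row_mat_col M = (rowv *m mx M *m colv) 0 0.
Proof.
rewrite /row_mat_col bigA2; under eq_bigr do rewrite bigA2.
rewrite !mxE; under [RHS]eq_bigr do rewrite !mxE mulr_suml.
rewrite exchange_big; apply: eq_bigr => i _; apply: eq_bigr => j _.
by rewrite !mxE.
Qed.

Lemma pw_add (A B : R) a b : (A + B) a b = A a b + B a b. Proof. by []. Qed.
Lemma pw_opp (A : R) a b : (- A) a b = - A a b. Proof. by []. Qed.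
Lemma pw_zero a b : (0 : R) a b = 0. Proof. by []. Qed.

Lemma id1 (x y E1 F0 : R) : y * (-E1 + F0) + (-x - y) * (-E1) = y * F0 + x * E1.
Proof.
rewrite mulrDr mulrDl !mulrN !mulNr.
move: (y * E1) (y * F0) (x * E1) => A B C.
by apply/funext=> a; apply/funext=> b; rewrite !(pw_add, pw_opp); ring.
Qed.

Lemma id2 (x y E0 E1 F0 : R) :
  y * (- (-(E0 + E1)) - F0) + (-x - y) * (- (-(E0 + E1))) = -(x * E0) - (y * F0 + x * E1).
Proof.
rewrite !opprK !mulrDr !mulrDl !mulrN !mulNr ?mulrDr.
move: (y * E0) (y * E1) (y * F0) (x * E0) (x * E1) => A B C D E.
by apply/funext=> a; apply/funext=> b; rewrite !(pw_add, pw_opp); ring.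
Qed.

Lemma nseq_rcons n (b : bool) : nseq n b ++ [:: b] = nseq n.+1 b.
Proof. by elim: n => //= n ->. Qed.

Definition row3 (x y z : R) : 'rV[R]_3 := \row_j nth 0 [:: x; y; z] j.
Definition xn n : R := bas2 k (nseq n false) [::].
Definition yn n : R :=
  \sum_(i < n) bas2 k (yword i) (nseq (n - i.+1) false) - bas2 k [::] (nseq n false).
Definition vrow n := row3 (xn n) (yn n) (- xn n - yn n).
Fixpoint vn n := if n is n'.+1 then vn n' *m Rl false else rowv.

Lemma xn_E0 n : xn n * e2 k false = xn n.+1.
Proof. by rewrite /xn /e2 bas2M nseq_rcons. Qed.
Lemma xn_E1 n : xn n * e2 k true = bas2 k (yword n) [::].
Proof. by rewrite /xn /e2 bas2M /yword cats1. Qed.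
Lemma yn_F0 n : yn n * f2 k false =
  \sum_(i < n) bas2 k (yword i) (nseq (n.+1 - i.+1) false) - bas2 k [::] (nseq n.+1 false).
Proof.
rewrite /yn mulrBl mulr_suml /f2 bas2M /= nseq_rcons; congr (_ - _).
apply: eq_bigr => i _; rewrite bas2M cats0 nseq_rcons subSn //.
Qed.
Lemma yn_S n : yn n.+1 = yn n * f2 k false + xn n * e2 k true.
Proof.
rewrite yn_F0 xn_E1 /yn big_ord_recr /= subnn /=.
by rewrite addrAC.
Qed.

Lemma vnE n : vn n = vrow n.
Proof.
elim: n => [|n IH] /=.
  apply/matrixP => i j; rewrite !mxE.
  case: j => [[|[|[|?]]] ?] //=; rewrite /yn big_ord0 ?sub0r //.
  by rewrite opprK addNr.
rewrite IH; apply/matrixP => i j; rewrite !mxE !big_ord_recl big_ord0 !mxE.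
case: j => [[|[|[|?]]] ?] //=.
all: rewrite /rho_e0 /M3of /=.
- by rewrite !mulr0 !addr0 xn_E0.
- change (xn n * 0 + (yn n * (- e2 k true + f2 k false) + ((- xn n - yn n) * (- e2 k true) + 0))
    = yn n.+1).
  by rewrite mulr0 add0r addr0 id1 yn_S.
- change (xn n * 0 + (yn n * (- (-(e2 k false + e2 k true)) - f2 k false) +
    ((- xn n - yn n) * (- (-(e2 k false + e2 k true))) + 0)) = - xn n.+1 - yn n.+1).
  by rewrite mulr0 add0r addr0 id2 -xn_E0 yn_S.
Qed.

Lemma yn_F1 n : yn n * f2 k true =
  \sum_(i < n) bas2 k (yword i) (yword (n - i.+1)) - bas2 k [::] (yword n).
Proof.
rewrite /yn mulrBl mulr_suml /f2 bas2M /= /yword cats1; congr (_ - _).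
by apply: eq_bigr => i _; rewrite bas2M cats0 cats1.
Qed.

Lemma keyK n : (vn n *m colv) 0 0 = DeltaY k n.
Proof.
rewrite vnE !mxE !big_ord_recl big_ord0 !mxE /rcol /=.
change (xn n * e2 k true + (yn n * (- f2 k true) + ((- xn n - yn n) * 0 + 0)) =
  (bas2 k (yword n) [::] + bas2 k [::] (yword n)) +
   - (\sum_(i < n) bas2 k (yword i) (yword (n - i.+1)))).
rewrite mulr0 !addr0 xn_E1 mulrN yn_F1.
move: (bas2 k (yword n) [::]) (bas2 k [::] (yword n)) (\sum_(i < n) _) => A B C.
by apply/funext=> a; apply/funext=> b; rewrite !(pw_add, pw_opp); ring.
Qed.

Lemma R1E : Rl true = colv *m rowv.
Proof.
apply/matrixP => i j; rewrite /Rl /rhom !mxE big_ord1 !mxE /rho_e1 /M3of /rcol /rrow.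
case: i => [[|[|[|?]]] ?] //=; case: j => [[|[|[|?]]] ?] //=;
  rewrite ?mulr1 ?mulrN1 ?mulrNN ?mulr0 ?mul0r. all: rewrite /rho_e1 /M3of /= ?opprK ?oppr0 //.
Qed.

Lemma DW_main w n : DW_aux k n (rcons w true) = (vn n *m Qw w *m colv) 0 0.
Proof.
elim: w n => [|b w IH] n.
  change (DeltaY k n * 1 = (vn n *m 1%:M *m colv) 0 0).
  by rewrite mulr1 mulmx1 keyK.
case: b.
  change (DeltaY k n * DW_aux k 0 (rcons w true) = (vn n *m (Rl true *m Qw w) *m colv) 0 0).
  rewrite IH R1E -keyK /=.
  have -> : vn n *m (colv *m rowv *m Qw w) *m colv = (vn n *m colv) *m (rowv *m Qw w *m colv).
    by rewrite !mulmxA.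
  by rewrite [in RHS]mxE big_ord1.
change (DW_aux k n.+1 (rcons w true) = (vn n *m (Rl false *m Qw w) *m colv) 0 0).
by rewrite IH /= mulmxA.
Qed.

Lemma rmc_add (A B : M3 k) : row_mat_col (fun i j => A i j + B i j) = row_mat_col A + row_mat_col B.
Proof.
rewrite !rmc; transitivity ((rowv *m (mx A + mx B) *m colv) 0 0).
  by congr ((_ *m _ *m _) _ _); apply/matrixP => i j; rewrite !mxE.
by rewrite mulmxDr mulmxDl mxE.
Qed.

Lemma rmc_scal c (A : M3 k) : row_mat_col (fun i j => scal2 c (A i j)) = scal2 c (row_mat_col A).
Proof.
rewrite /row_mat_col !bigA2 scal2_sum; apply: eq_bigr => i _.
rewrite !bigA2 scal2_sum; apply: eq_bigr => j _.
change ((rrow k i * scal2 c (A i j)) * rcol k j = scal2 c (rrow k i * A i j * rcol k j)).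
by rewrite scal2Mr scal2Ml.
Qed.

Lemma rmc_zero : row_mat_col (fun _ _ => 0 : R) = 0.
Proof.
rewrite rmc; have -> : mx (fun _ _ => 0) = 0 by apply/matrixP => i j; rewrite !mxE.
by rewrite mulmx0 mul0mx mxE.
Qed.

Lemma word_main w : row_mat_col (fun i j => S2 (rho_word k (rev w) j i)) =
  scal2 ((-1) ^+ size w) (DW k (rcons w true)).
Proof.
rewrite rmc.
have -> : mx (fun i j => S2 (rho_word k (rev w) j i)) = TS (mx (rho_word k (rev w))).
  by apply/matrixP => i j; rewrite !mxE.
rewrite TS_rho mx_sign -scalemxAl mxE sign_scal2.
by rewrite /DW DW_main.
Qed.

Lemma sign_sq n : (-1) ^+ n * (-1) ^+ n = 1 :> k.
Proof. by rewrite -exprMn mulrNN mulr1 expr1n. Qed.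

End S.

Lemma x_nil (k : comRingType) (l : k) (v : ser k) :
  addV (constV l) (mulV v (eV k true)) [::] = l.
Proof. by rewrite /addV /constV /mulV /eV big_ord1 /= mulr0 addr0. Qed.

Lemma x_rcons (k : comRingType) (l : k) (v : ser k) w :
  addV (constV l) (mulV v (eV k true)) (rcons w true) = v w.
Proof.
rewrite /addV /constV /mulV /eV.
have -> : (rcons w true == [::]) = false by case: w.
rewrite add0r size_rcons big_ord_recr big_ord_recr /= -cats1 drop_size_cat // take_size_cat //.
rewrite drop_oversize ?size_cat ?addn1 // mulr0 addr0 eqxx mulr1 big1 ?add0r // => i _.
have hi := ltn_ord i.
have -> : (drop i (w ++ [:: true]) == [:: true]) = false.
  apply/negbTE/eqP => h; have := congr1 size h; rewrite size_drop size_cat /=; lia.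
by rewrite mulr0.
Qed.


Unset Implicit Arguments.
Theorem theorem3p18 (k : comAlgType rat) (l : k) (v : ser k) (s : seq word) :
  uniq s -> (forall w, w \notin s -> v w = 0) ->
  forall a b : word,
    DeltaW ([::] :: [seq rcons w true | w <- s])
           (addV (constV l) (mulV v (eV k true))) a b
    = Delta_Omat s l v a b.
Proof.
move=> _ _ a b; congr (_ a b).
rewrite /DeltaW /Delta_Omat bigA2 big_cons big_map x_nil.
change (scal2 l (one2 k) + \sum_(j <- s) scal2 (addV (constV l) (mulV v (eV k true)) (rcons j true))
      (DW k (rcons j true)) = scal2 l (one2 k) + row_mat_col (rrho s v)).
congr (_ + _).
elim: s => [|w s IH].
  rewrite big_nil -rmc_zero; congr row_mat_col.
  by apply/funext => i; apply/funext => j; rewrite /rrho /rho big_nil S20.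
rewrite big_cons IH x_rcons.
have -> : rrho (w :: s) v = fun i j => scal2 (SV v (rev w)) (S2 (rho_word k (rev w) j i)) + rrho s v i j.
  apply/funext => i; apply/funext => j.
  by rewrite /rrho /rho /= big_cons -S2scal -S2D.
rewrite rmc_add rmc_scal word_main scal2A /SV size_rev revK.
by rewrite mulrAC sign_sq mul1r.
Qed.
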